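(* Let $q\ge5$ be an integer coprime to $6$ and let $b$ be the inverse of $2$ modulo $q$. For any prime $p\mid q$, $$\sum_{d\ (\mathrm{mod}\ p)}\left(\frac{d(d+1)(d+2)(d+3)}{p}\right)=-(\Delta_p+1),$$ where $\Delta_p:=p+1-\#E_{3b^2}(\mathbb{F}_p)$.
   Context: $\left(\frac{\cdot}{p}\right)$ is the Legendre symbol. For $\lambda\in\mathbb{F}_p$, $E_\lambda/\mathbb{F}_p$ is the curve with Legendre model $y^2=x(x-1)(x-\lambda)$, and $\#E_\lambda(\mathbb{F}_p)$ counts its $\mathbb{F}_p$-rational points including the point at infinity. *)

(* Defs.v *)
From mathcomp Require Import all_boot all_algebra.
Set Implicit Arguments. Unset Strict Implicit. Unset Printing Implicit Defensive.
Import GRing.Theory Num.Theory.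
Local Open Scope ring_scope.

Definition legendre (p : nat) (a : int) : int :=
  if (p%:Z %| a)%Z then 0
  else if [exists x : 'I_p, (p%:Z %| (x%:Z) ^+ 2 - a)%Z] then 1 else -1.

(* #E_lam(F_p) for the Legendre model y^2 = x(x-1)(x-lam), including the
   point at infinity. *)
Definition ellpts (p : nat) (lam : 'F_p) : nat :=
  #|[set xy : 'F_p * 'F_p | xy.2 ^+ 2 == xy.1 * (xy.1 - 1) * (xy.1 - lam)]|.+1.

(* Main.v *)
Require Import Defs.
From mathcomp Require Import all_boot all_algebra.
Import GRing.Theory Num.Theory.
Local Open Scope ring_scope.

Definition chi {p : nat} (a : 'F_p) : int :=
  if a == 0 then 0 else if [exists y : 'F_p, y ^+ 2 == a] then 1 else -1.

Lemma Fp_nat_eq (p m n : nat) : prime p ->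
  ((m%:R : 'F_p) == n%:R) = (m == n %[mod p])%N.
Proof. by move=> pr; rewrite -val_eqE /= !val_Fp_nat. Qed.

Lemma PoszX (x k : nat) : ((x ^ k)%N%:Z) = (x%:Z) ^+ k.
Proof. by elim: k => // k IH; rewrite expnS exprS PoszM IH. Qed.

Lemma legendre_chi (p n : nat) : prime p ->
  legendre p n%:Z = chi (n%:R : 'F_p).
Proof.
move=> pr; rewrite /legendre /chi.
have -> : (p%:Z %| n%:Z)%Z = ((n%:R : 'F_p) == 0).
  by rewrite dvdzE /= (dvdn_pcharf (pchar_Fp pr)).
case: ifP => // _.
have -> : [exists x : 'I_p, (p%:Z %| (x%:Z) ^+ 2 - n%:Z)%Z]
        = [exists y : 'F_p, y ^+ 2 == n%:R]; last by [].
apply/existsP/existsP => [[x Hx]|[y Hy]].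
  exists (x%:R); rewrite -natrX Fp_nat_eq //.
  by move: Hx; rewrite -eqz_mod_dvd -PoszX !modz_nat eqz_nat.
have yp : (val y < p)%N by case: y {Hy} => y1 Hy1 /=; rewrite -(Fp_cast pr).
exists (Ordinal yp); rewrite -eqz_mod_dvd -PoszX !modz_nat eqz_nat /=.
by rewrite -Fp_nat_eq // natrX (natr_Zp y).
Qed.

Lemma chi_sq (p : nat) (a s : 'F_p) : s != 0 -> chi (a * s ^+ 2) = chi a.
Proof.
move=> s0; rewrite /chi mulf_eq0 expf_eq0 (negbTE s0) andbF orbF.
case: ifP => // _.
have -> : [exists y : 'F_p, y ^+ 2 == a * s ^+ 2] = [exists y : 'F_p, y ^+ 2 == a];
  last by [].
apply/existsP/existsP => [[y /eqP Hy]|[y /eqP Hy]].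
  exists (y / s); apply/eqP; rewrite expr_div_n Hy mulfK //.
  by rewrite expf_neq0.
by exists (y * s); rewrite exprMn Hy.
Qed.

Lemma count_sqrt (p : nat) (a : 'F_p) : (2%:R : 'F_p) != 0 ->
  (#|[set y : 'F_p | y ^+ 2 == a]|)%:Z = 1 + chi a.
Proof.
move=> two0; rewrite /chi; case: (eqVneq a 0) => [->|a0].
  have -> : [set y : 'F_p | y ^+ 2 == 0] = [set 0].
    by apply/setP => y; rewrite !inE sqrf_eq0.
  by rewrite cards1.
case: existsP => [[r /eqP Hr]|Hn].
  have -> : [set y : 'F_p | y ^+ 2 == a] = [set r; -r].
    by apply/setP => y; rewrite !inE -Hr eqf_sqr.
  rewrite cards2.
  have -> : r != - r.
    apply/negP => /eqP H; move: a0; rewrite -Hr.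
    have : r *+ 2 == 0 by rewrite mulr2n {1}H addNr.
    by rewrite -mulr_natl mulf_eq0 (negbTE two0) /= => /eqP ->; rewrite expr0n eqxx.
  by [].
have -> : [set y : 'F_p | y ^+ 2 == a] = set0.
  by apply/setP => y; rewrite !inE; apply/negP => H; apply: Hn; exists y.
by rewrite cards0.
Qed.

Lemma sum_Ip_Fp (p : nat) (G : 'F_p -> int) : prime p ->
  \sum_(d < p) G (d%:R) = \sum_(x : 'F_p) G x.
Proof.
move=> pr.
have -> : \sum_(x : 'F_p) G x = \sum_(x : 'F_p) G ((val x)%:R).
  by apply: eq_bigr => x _; rewrite (natr_Zp x).
rewrite -(big_mkord xpredT (fun d => G d%:R)).
rewrite -(big_mkord xpredT (fun d => G d%:R)).
by rewrite (Fp_cast pr).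
Qed.

Lemma card_pairs (p : nat) (f : 'F_p -> 'F_p) :
  #|[set xy : 'F_p * 'F_p | xy.2 ^+ 2 == f xy.1]|
  = (\sum_(x : 'F_p) #|[set y : 'F_p | y ^+ 2 == f x]|)%N.
Proof.
rewrite -sum1_card big_mkcond.
transitivity (\sum_(x : 'F_p) \sum_(y : 'F_p) (if (x, y) \in [set xy : 'F_p * 'F_p | xy.2 ^+ 2 == f xy.1] then 1 else 0))%N.
  by rewrite pair_bigA; apply: eq_bigr => -[x y] _.
apply: eq_bigr => x _; rewrite -sum1_card [RHS]big_mkcond.
by apply: eq_bigr => y _; rewrite !inE.
Qed.

From mathcomp Require Import ring.

Lemma not_dvd_small (p k : nat) : prime p -> coprime p 6 -> (k %| 6)%N ->
  (k%:R : 'F_p) != 0.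
Proof.
move=> pr cp kd; rewrite -(dvdn_pcharf (pchar_Fp pr)); apply/negP => H.
have : (p %| gcdn p 6)%N by rewrite dvdn_gcd dvdnn (dvdn_trans H kd).
rewrite (eqP cp) dvdn1 => /eqP p1.
by move: (prime_gt1 pr); rewrite p1.
Qed.

Theorem lemma6p5 (q b p : nat) :
  (5 <= q)%N -> coprime q 6 -> (2 * b = 1 %[mod q])%N ->
  prime p -> (p %| q)%N ->
  \sum_(d < p) legendre p (d * (d + 1) * (d + 2) * (d + 3))%N%:Z
  = - ((p%:Z + 1 - (ellpts ((3 * b ^ 2)%N%:R : 'F_p))%:Z) + 1).
Proof.
move=> q5 cop hb pr pq.
have cp6 : coprime p 6 := coprime_dvdl pq cop.
have two0 : (2%:R : 'F_p) != 0 by apply: not_dvd_small.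
have three0 : (3%:R : 'F_p) != 0 by apply: not_dvd_small.
have four0 : (4%:R : 'F_p) != 0.
  by rewrite (_ : 4%:R = 2%:R * 2%:R :> 'F_p) ?mulf_neq0 // -natrM.
have hb1 : (2%:R * b%:R : 'F_p) = 1.
  rewrite -natrM -Fp_nat_mod //.
  have -> : ((2 * b) %% p = 1 %% p)%N by rewrite -(modn_dvdm _ pq) hb modn_dvdm.
  by rewrite Fp_nat_mod.
have hb2 : (b%:R : 'F_p) = 2%:R^-1.
  by apply: (mulfI two0); rewrite hb1 mulfV.
set lam := ((3 * b ^ 2)%N%:R : 'F_p).
have hlam : lam = 3%:R / 4%:R.
  rewrite /lam natrM natrX hb2; field.
  by rewrite four0 two0.
set Q := fun x : 'F_p => x * (x + 1) * (x + 2%:R) * (x + 3%:R).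
set C := fun u : 'F_p => (1 + u) * (1 + 2%:R * u) * (1 + 3%:R * u).
set f := fun x : 'F_p => x * (x - 1) * (x - lam).
have stepA : \sum_(d < p) legendre p (d * (d + 1) * (d + 2) * (d + 3))%N%:Z
    = \sum_(x : 'F_p) chi (Q x).
  rewrite -(@sum_Ip_Fp p (fun x => chi (Q x)) pr).
  apply: eq_bigr => d _; rewrite legendre_chi // /Q.
  by rewrite !natrM !natrD.
have stepB : \sum_(x : 'F_p) chi (Q x) = \sum_(u : 'F_p) chi (C u) - 1.
  rewrite (reindex_inj invr_inj) (bigD1 0) //= [in RHS](bigD1 0) //=.
  have -> : Q 0^-1 = 0 by rewrite invr0 /Q !mul0r.
  have -> : C 0 = 1 by rewrite /C !mulr0 !addr0 !mulr1.
  have -> : chi (0 : 'F_p) = 0 by rewrite /chi eqxx.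
  have -> : chi (1 : 'F_p) = 1.
    rewrite /chi oner_eq0; case: existsP => // - [].
    by exists 1; rewrite expr1n.
  rewrite add0r [1 + _]addrC addrK; apply: eq_bigr => u u0.
  rewrite -(@chi_sq p (C u) (u^-1 ^+ 2)); last by rewrite expf_neq0 // invr_eq0.
  congr chi.
  rewrite /Q /C; field; exact: u0.
have stepC : \sum_(u : 'F_p) chi (C u) = \sum_(x : 'F_p) chi (f x).
  have hinj : injective (fun x : 'F_p => -1 + (2%:R / 3%:R) * x).
    move=> x y /addrI; apply: mulfI.
    by rewrite mulf_neq0 // invr_eq0.
  rewrite (reindex_inj hinj); apply: eq_bigr => x _.
  rewrite -(@chi_sq p (f x) (4%:R / 3%:R)); last first.
    by rewrite mulf_neq0 // invr_eq0.
  congr chi; rewrite /C /f hlam; field.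
  by rewrite three0 four0.
have stepD : ((ellpts lam)%:Z = 1 + p%:Z + \sum_(x : 'F_p) chi (f x)).
  have -> : ellpts lam = (#|[set xy : 'F_p * 'F_p | xy.2 ^+ 2 == f xy.1]|).+1 by [].
  rewrite card_pairs -addn1 PoszD (big_morph Posz PoszD (erefl _)).
  rewrite (eq_bigr (fun x => 1 + chi (f x))); last by move=> x _; rewrite count_sqrt.
  rewrite big_split /= sumr_const card_Fp // natz.
  ring.
rewrite stepA stepB stepC stepD.
ring.
Qed.
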